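(* Let $(V,\|\cdot\|)$ be a Banach space. Then $V$ admits exactly one conical bicombing, namely the one given by linear segments, $\sigma(x,y,t)=(1-t)x+ty$.
   Context: A bicombing on a metric space $(X,d)$ is a map $\sigma\colon X\times X\times[0,1]\to X$ such that each $\sigma_{xy}:=\sigma(x,y,\cdot)$ is a geodesic from $x$ to $y$ ($\sigma_{xy}(0)=x$, $\sigma_{xy}(1)=y$, $d(\sigma_{xy}(s),\sigma_{xy}(t))=|s-t|d(x,y)$). It is conical if $d(\sigma_{xy}(t),\sigma_{x'y'}(t))\le(1-t)d(x,x')+t\,d(y,y')$ for all $x,y,x',y'\in X$ and $t\in[0,1]$. The Banach space carries the metric $d(x,y)=\|x-y\|$. *)

(* Defs.v *)
From HB Require Import structures.
From mathcomp Require Import all_boot all_order all_algebra.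
From mathcomp Require Import all_classical all_reals all_analysis.
Set Implicit Arguments. Unset Strict Implicit. Unset Printing Implicit Defensive.
Import Order.TTheory GRing.Theory Num.Theory.
Import numFieldNormedType.Exports.
Local Open Scope ring_scope.

(* A bicombing on a normed space V (metric d(x,y) = `|x - y|) is represented
   as a map sigma : V -> V -> R -> V; only its values for t in [0,1] matter. *)

Definition is_geodesic (R : realType) (V : normedModType R)
  (x y : V) (g : R -> V) : Prop :=
  g 0 = x /\ g 1 = y /\
  forall s t : R, 0 <= s <= 1 -> 0 <= t <= 1 ->
    `|g s - g t| = `|s - t| * `|x - y|.

Definition is_bicombing (R : realType) (V : normedModType R)
  (sigma : V -> V -> R -> V) : Prop :=
  forall x y : V, is_geodesic x y (sigma x y).

Definition is_conical (R : realType) (V : normedModType R)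
  (sigma : V -> V -> R -> V) : Prop :=
  forall (x y x' y' : V) (t : R), 0 <= t <= 1 ->
    `|sigma x y t - sigma x' y' t| <= (1 - t) * `|x - x'| + t * `|y - y'|.

Definition conical_bicombing (R : realType) (V : normedModType R)
  (sigma : V -> V -> R -> V) : Prop :=
  is_bicombing sigma /\ is_conical sigma.

Definition linear_bicombing (R : realType) (V : normedModType R)
  : V -> V -> R -> V :=
  fun x y t => (1 - t) *: x + t *: y.

(* Main.v *)
Require Import Defs.
From HB Require Import structures.
From mathcomp Require Import all_boot all_order all_algebra.
From mathcomp Require Import all_classical all_reals all_analysis.
From mathcomp Require Import ring lra.
Import Order.TTheory GRing.Theory Num.Theory.
Import numFieldNormedType.Exports.
Local Open Scope ring_scope.

Section Aux.
Variables (R : realType) (V : normedModType R).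

Lemma lin_conical : conical_bicombing (@linear_bicombing R V).
Proof.
split.
- move=> x y; rewrite /is_geodesic /linear_bicombing; split; last split.
  + by rewrite subr0 scale1r scale0r addr0.
  + by rewrite subrr scale0r add0r scale1r.
  + move=> s t _ _.
    have -> : (1 - s) *: x + s *: y - ((1 - t) *: x + t *: y) = (s - t) *: (y - x).
      rewrite opprD addrACA -!scalerBl.
      have -> : 1 - s - (1 - t) = - (s - t) by ring.
      by rewrite scaleNr addrC -scalerBr.
    by rewrite normrZ (distrC y x).
- move=> x y x' y' t /andP[t0 t1]; rewrite /linear_bicombing.
  have -> : (1 - t) *: x + t *: y - ((1 - t) *: x' + t *: y') =
            (1 - t) *: (x - x') + t *: (y - y').
    by rewrite opprD addrACA -!scalerBr.
  apply: le_trans (ler_normD _ _) _.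
  rewrite !normrZ !ger0_norm ?subr_ge0 //.
Qed.

Lemma key (sigma : V -> V -> R -> V) (hs : conical_bicombing sigma)
  (x y : V) (t a : R) (e v : V) : 0 < t -> t <= 1 -> 0 <= a ->
  e = sigma x y t - linear_bicombing x y t ->
  v = y - x ->
  `|v + ((1 + a) / t) *: e| - ((1 + a) / t) * `|e| <=
  `|v + a *: e| - a * `|e| - `|e| / t.
Proof.
move=> t0 t1 a0 he hv.
case: hs => hb hc.
set x' := x - a *: e.
set p := sigma x y t; set q := sigma x' y t.
have h1 : `|p - q| <= (1 - t) * (a * `|e|).
  have := hc x y x' y t; rewrite t1 ltW // => /(_ isT).
  by rewrite subrr normr0 mulr0 addr0 /x' opprB addrCA subrr addr0 normrZ (ger0_norm a0).
have h2 : `|q - x'| = t * `|v + a *: e|.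
  have [g0 [_ gd]] := hb x' y.
  have := gd t 0; rewrite lexx ler01 t1 ltW // => /(_ isT isT).
  rewrite g0 subr0 ger0_norm ?ltW // -/q => ->.
  by rewrite distrC /x' hv opprB addrCA [a *: e + _]addrC.
have hp : p = x + t *: v + e.
  have L : linear_bicombing x y t = x + t *: v.
    by rewrite /linear_bicombing hv scalerBl scale1r scalerBr -addrA [-(t*:x) + _]addrC.
  by rewrite -L he addrC subrK.
have h3 : t *: (v + ((1 + a) / t) *: e) = (p - q) + (q - x').
  rewrite scalerDr scalerA mulrCA divff ?gt_eqF // mulr1 hp /x'.
  rewrite addrA subrK scalerDl scale1r opprB (addrC (a *: e)) addrA.
  by rewrite -(addrA x) (addrC x) addrA addrK.
have h4 : t * `|v + ((1 + a) / t) *: e| <= (1 - t) * (a * `|e|) + t * `|v + a *: e|.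
  by rewrite -[t in t * _](ger0_norm (ltW t0)) -normrZ h3 -h2; apply: le_trans (ler_normD _ _) _; rewrite lerD2r.
have h5 : `|v + ((1 + a) / t) *: e| <= (1 - t) / t * (a * `|e|) + `|v + a *: e|.
  rewrite -(ler_pM2l t0) mulrDr.
  have -> : t * ((1 - t) / t * (a * `|e|)) = (1 - t) * (a * `|e|).
    by field; rewrite gt_eqF.
  exact: h4.
set N := `|v + ((1 + a) / t) *: e| in h5 *.
set M := `|v + a *: e| in h5 *.
have -> : (1 + a) / t * `|e| = (1 - t) / t * (a * `|e|) + a * `|e| + `|e| / t.
  by field; rewrite gt_eqF.
lra.
Qed.

End Aux.

Theorem proposition3p3 (R : realType) (V : completeNormedModType R) :
  conical_bicombing (@linear_bicombing R V) /\
  forall sigma : V -> V -> R -> V, conical_bicombing sigma ->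
    forall (x y : V) (t : R), 0 <= t <= 1 ->
      sigma x y t = linear_bicombing x y t.
Proof.
split; first exact: lin_conical.
move=> sigma hs x y t /andP[t0 t1].
have [->|tpos] := eqVneq t 0.
  have [g0 _] := (hs.1 x y).
  by rewrite g0 /linear_bicombing subr0 scale1r scale0r addr0.
have tp : 0 < t by rewrite lt_def tpos t0.
set e := sigma x y t - linear_bicombing x y t.
set v := y - x.
pose psi (s : R) := `|v + s *: e| - s * `|e|.
pose fix a (n : nat) : R := if n is n'.+1 then (1 + a n') / t else 0.
have a0 : forall n, 0 <= a n.
  elim=> [|n IH] //=; by rewrite divr_ge0 // ?addr_ge0 // ltW.
have hind : forall n : nat, psi (a n) <= `|v| - n%:R * (`|e| / t).
  elim=> [|n IH] /=; first by rewrite /psi scale0r addr0 !mul0r !subr0.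
  have hk := @key R V sigma hs x y t (a n) e v tp t1 (a0 n) erefl erefl.
  rewrite /psi; apply: (le_trans hk); rewrite -/(psi (a n)) -natr1 mulrDl mul1r.
  lra.
have lb : forall s, 0 <= s -> - `|v| <= psi s.
  move=> s s0; rewrite /psi.
  have : `|s *: e| <= `|v + s *: e| + `|v|.
    by have := ler_normB (v + s *: e) v; rewrite addrAC subrr add0r.
  rewrite normrZ ger0_norm //; lra.
have ce0 : 0 <= `|e| / t by rewrite divr_ge0 // ltW.
have hb : forall n : nat, n%:R * (`|e| / t) <= 2 * `|v|.
  move=> n; have := lb _ (a0 n); have := hind n; lra.
apply/eqP; rewrite -subr_eq0 -normr_eq0; apply/eqP.
have : `|e| / t = 0.
  apply/eqP; rewrite eq_le ce0 andbT; apply/negP => /negP; rewrite -ltNge => cpos.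
  set B := 2 * `|v| / (`|e| / t).
  have B0 : 0 <= B by rewrite /B divr_ge0 // mulr_ge0 // ler0n.
  have := hb (Num.Def.archi_bound B).
  have := archi_boundP B0.
  rewrite /B ltr_pdivrMr //; lra.
by move/eqP; rewrite mulf_eq0 invr_eq0 (negbTE tpos) orbF => /eqP.
Qed.
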